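(* Let $N\ge1$, $f:\mathbb{N}^N\to\mathbb{N}$, $p$ a prime and $\boldsymbol{\ell}\in\mathbb{N}^N$. Then $\binom{p}{\boldsymbol{\ell}}_f\equiv f(\mathbf{m})\pmod p$ if $\boldsymbol{\ell}=p\mathbf{m}$ for some $\mathbf{m}\in\mathbb{N}^N$, and $\binom{p}{\boldsymbol{\ell}}_f\equiv0\pmod p$ otherwise.
   Context: $\mathbb{N}=\{0,1,2,\dots\}$. For $k\ge0$ and $\mathbf{x}\in\mathbb{N}^N$, $\binom{k}{\mathbf{x}}_f=\sum_{\mathbf{m}_1+\cdots+\mathbf{m}_k=\mathbf{x}} f(\mathbf{m}_1)\cdots f(\mathbf{m}_k)$ over tuples of vectors in $\mathbb{N}^N$. *)

(* Defs.v *)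
From mathcomp Require Import all_boot.
Set Implicit Arguments. Unset Strict Implicit. Unset Printing Implicit Defensive.

Definition vecN (N : nat) := {ffun 'I_N -> nat}.

(* Componentwise bound: every summand m_i of a decomposition x = m_1+...+m_k
   satisfies m_i j <= x j <= vbound x, so summing over tuples of vectors with
   entries in 'I_(vbound x).+1 enumerates exactly all k-tuples of vectors in
   N^N summing to x. *)
Definition vbound N (x : vecN N) : nat := \max_(j < N) x j.

Definition to_vec N B (v : {ffun 'I_N -> 'I_B}) : vecN N := [ffun j => val (v j)].

Definition binom_f N (f : vecN N -> nat) (k : nat) (x : vecN N) : nat :=
  \sum_(t : {ffun 'I_k -> {ffun 'I_N -> 'I_(vbound x).+1}}
          | [forall j : 'I_N, \sum_(i < k) val (t i j) == x j])
     \prod_(i < k) f (to_vec (t i)).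

Definition scalev N (p : nat) (m : vecN N) : vecN N := [ffun j => p * m j].

(* Main.v *)
Require Import Defs.
From mathcomp Require Import all_boot fingroup perm action pgroup sylow cyclic.
From mathcomp Require Import zify.
Set Implicit Arguments. Unset Strict Implicit. Unset Printing Implicit Defensive.

Lemma sum_ltn_ord M n : \sum_(k < M) (k < n) = minn M n.
Proof.
elim: M => [|M IH]; first by rewrite big_ord0 min0n.
rewrite big_ord_recr /= IH.
case: (ltnP M n) => h /=; lia.
Qed.

Section W.
Variables (T : finType) (F : T -> nat).
Let M := (\sum_x F x).+1.

Lemma cardW (P : pred T) :
  #|[set u : T * 'I_M | P u.1 && (u.2 < F u.1)]| = \sum_(x | P x) F x.
Proof.
rewrite -sum1_card big_mkcond /=.
transitivity (\sum_x \sum_(k : 'I_M) ((P x && (k < F x)) : nat)).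
  by rewrite pair_big; apply: eq_bigr => -[x k] _; rewrite inE /=; case: ifP.
rewrite [RHS]big_mkcond /=; apply: eq_bigr => x _.
case: (P x).
  rewrite -[RHS](@minn_idPr M (F x) _); last first.
    by apply: ltnW; rewrite ltnS (bigD1 x) //= leq_addr.
  by rewrite -sum_ltn_ord.
by apply: big1.
Qed.
End W.

Lemma weighted_fix_mod (T : finType) (F : T -> nat) (p : nat) (s : {perm T}) (A : pred T) :
  prime p -> (s ^+ p = 1)%g -> (forall x, (s x \in A) = (x \in A)) ->
  (forall x, F (s x) = F x) ->
  \sum_(x | x \in A) F x = \sum_(x | (x \in A) && (s x == x)) F x %[mod p].
Proof.
move=> pp sp sA sF.
pose M := (\sum_x F x).+1.
have inj : injective (fun u : T * 'I_M => (s u.1, u.2)).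
  by move=> [x k] [y l] /= [/perm_inj -> ->].
pose sg := perm inj.
pose S := [set u : T * 'I_M | (u.1 \in A) && (u.2 < F u.1)].
rewrite -(cardW F (mem A)) -(cardW F [pred x | (x \in A) && (s x == x)]).
have pG : (p.-group <[sg]>)%g.
  rewrite /pgroup /= -orderE; apply: pnat_dvd (pnat_id pp).
  rewrite order_dvdn; apply/eqP/permP => -[x k].
  rewrite permX perm1.
  have -> : forall n, iter n sg (x, k) = (iter n s x, k).
    elim=> [|n IH] //.
    by rewrite iterS IH /sg permE.
  by rewrite -permX sp perm1.
have nS : [acts <[sg]>%G, on S | 'P].
  rewrite /= cycle_subG; apply/astabsP => -[x k].
  by rewrite /= apermE /sg permE !inE /= sA sF.
rewrite (pgroup_fix_mod pG nS) /= afix_cycle.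
congr (_ %% _); apply: eq_card => -[x k].
rewrite !inE /= sub1set !inE apermE /sg permE /= xpair_eqE eqxx andbT.
by case: (x \in A); case: (k < F x); case: (s x == x).
Qed.

Lemma iter_ordS n (i : 'I_n) k : val (iter k (@ordS n) i) = (i + k) %% n.
Proof.
elim: k => [|k IH] /=; first by rewrite addn0 modn_small.
by rewrite IH -addn1 modnDml addn1 addnS.
Qed.

Theorem theorem6 (N : nat) (f : vecN N -> nat) (p : nat) (l : vecN N) :
  0 < N -> prime p ->
  (forall m : vecN N, l = scalev p m -> binom_f f p l = f m %[mod p]) /\
  ((~ exists m : vecN N, l = scalev p m) -> binom_f f p l = 0 %[mod p]).
Proof.
case: p => [|p] N0 pp; first by [].
set B := (vbound l).+1.
pose F (t : {ffun 'I_p.+1 -> {ffun 'I_N -> 'I_B}}) := \prod_(i < p.+1) f (to_vec (t i)).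
pose A := [pred t : {ffun 'I_p.+1 -> {ffun 'I_N -> 'I_B}} |
            [forall j : 'I_N, \sum_(i < p.+1) val (t i j) == l j]].
have -> : binom_f f p.+1 l = \sum_(t | t \in A) F t by [].
pose rot (t : {ffun 'I_p.+1 -> {ffun 'I_N -> 'I_B}}) :=
  [ffun i => t (ordS i)] : {ffun 'I_p.+1 -> {ffun 'I_N -> 'I_B}}.
have rinj : injective rot.
  move=> t1 t2 /ffunP E; apply/ffunP => i.
  by have := E (ord_pred i); rewrite !ffunE ord_predK.
pose sg := perm rinj.
have sgE t : sg t = rot t by rewrite /sg permE.
have iterR k t : iter k rot t = [ffun i => t (iter k (@ordS p.+1) i)].
  elim: k => [|k IH]; first by apply/ffunP => i; rewrite ffunE.
  by apply/ffunP => i; rewrite iterS IH !ffunE iterSr.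
have sgp : (sg ^+ p.+1 = 1)%g.
  apply/permP => t; rewrite permX perm1.
  have itS k : iter k sg t = iter k rot t.
    by elim: k => // k IH; rewrite !iterS IH sgE.
  rewrite itS.
  rewrite iterR; apply/ffunP => i; rewrite ffunE; congr (t _).
  by apply: val_inj; rewrite iter_ordS modnDr modn_small.
have sA t : (sg t \in A) = (t \in A).
  rewrite sgE !inE; apply: eq_forallb => j; congr (_ == _).
  rewrite [in RHS](reindex_inj (@ordS_inj p.+1)) /=.
  by apply: eq_bigr => i _; rewrite ffunE.
have sF t : F (sg t) = F t.
  rewrite sgE /F [in RHS](reindex_inj (@ordS_inj p.+1)) /=.
  by apply: eq_bigr => i _; rewrite ffunE.
have key := weighted_fix_mod pp sgp sA sF.
have constE t : sg t = t -> t = [ffun => t ord0].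
  rewrite sgE => /ffunP E; apply/ffunP => i; rewrite ffunE.
  have itk k : t (iter k (@ordS p.+1) ord0) = t ord0.
    elim: k => // k IH; rewrite iterS -IH.
    by have := E (iter k (@ordS p.+1) ord0); rewrite ffunE.
  rewrite -(itk i); congr (t _).
  by apply: val_inj; rewrite iter_ordS add0n modn_small.
have sumC t j : sg t = t -> \sum_(i < p.+1) val (t i j) = p.+1 * val (t ord0 j).
  move=> /constE E; rewrite [in LHS]E.
  transitivity (\sum_(i < p.+1) val (t ord0 j)).
    by apply: eq_bigr => i _; rewrite ffunE.
  by rewrite big_const_ord iter_addn_0 mulnC.
split.
  move=> m lE.
  have mB j : m j < B.
    rewrite /B ltnS /vbound; apply: leq_trans _ (@leq_bigmax _ (fun j0 : 'I_N => l j0) j).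
    by rewrite lE ffunE leq_pmull.
  pose vm : {ffun 'I_N -> 'I_B} := [ffun j => inord (m j)].
  pose tm : {ffun 'I_p.+1 -> {ffun 'I_N -> 'I_B}} := [ffun => vm].
  have vmE j : val (vm j) = m j by rewrite ffunE; apply: inordK.
  have tmfix : sg tm = tm by rewrite sgE; apply/ffunP => i; rewrite !ffunE.
  rewrite key (big_pred1 tm); last first.
    move=> t; apply/idP/eqP => [/andP[tA /eqP tf]|->].
      rewrite (constE _ tf); apply/ffunP => i; rewrite !ffunE.
      apply/ffunP => j; apply: val_inj; rewrite vmE.
      move/forallP: tA => /(_ j) /eqP; rewrite sumC // lE ffunE.
      by move/eqP; rewrite eqn_pmul2l // => /eqP.
    rewrite tmfix eqxx andbT inE; apply/forallP => j.
    by rewrite sumC // ffunE vmE lE ffunE.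
  rewrite /F.
  transitivity ((f m ^ p.+1) %% p.+1); last by rewrite fermat_little.
  congr (_ %% _); transitivity (\prod_(i < p.+1) f m).
    apply: eq_bigr => i _; congr f; apply/ffunP => j.
    by rewrite !ffunE; apply: inordK.
  by rewrite big_const_ord iter_muln_1.
move=> nex; rewrite key big_pred0 // => t; apply/negP => /andP[tA /eqP tf].
apply: nex; exists [ffun j => val (t ord0 j)]; apply/ffunP => j.
move/forallP: tA => /(_ j) /eqP; rewrite sumC // => <-.
by rewrite !ffunE.
Qed.
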